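(* Let $\mu>0$, $\sigma\ge0$. Then the robust approximation ratio satisfies \[\mathrm{APX}(\mu,\sigma)\ \ge\ \sup_{(\Theta,F)\in\Delta_{\mu,\sigma}}\frac{\mathbb{E}_{\theta\sim\Theta}[\mathrm{OPT}(F_\theta)]}{\mathrm{OPT}\left(\mathbb{E}_{\theta\sim\Theta}[F_\theta]\right)}.\]
   Context: A nonnegative real random variable is $(\mu,\sigma)$-distributed if its expectation is $\mu$ and its standard deviation is at most $\sigma$; $\mathbb{F}_{\mu,\sigma}$ is the class of such distributions (identified with their cdfs). For a distribution $F$ of a nonnegative $X$ and price $p\ge 0$, $\mathrm{REV}(p;F)=p\Pr[X\ge p]$; for a distribution $A$ over prices, $\mathrm{REV}(A;F)=\mathbb{E}_{p\sim A}[\mathrm{REV}(p;F)]$; $\mathrm{OPT}(F)=\sup_{p\ge0}\mathrm{REV}(p;F)$; $\mathrm{APX}(\mu,\sigma)=\inf_A\sup_{F\in\mathbb{F}_{\mu,\sigma}}\mathrm{OPT}(F)/\mathrm{REV}(A;F)$, the infimum over all distributions $A$ over nonnegative prices (ratios with zero denominator are $+\infty$). A $(\mu,\sigma)$ mixture is a pair $(\Theta,F)$, where $\Theta$ is a probability measure on a measurable space $T$ and $F:\mathbb{R}_{\ge0}\times T\to\mathbb{R}$ is measurable such that each $F_\theta(x)=F(x;\theta)$ is the cdf of a distribution in $\mathbb{F}_{\mu,\sigma}$; $\Delta_{\mu,\sigma}$ is the class of all $(\mu,\sigma)$ mixtures. The posterior distribution $\mathbb{E}_{\theta\sim\Theta}[F_\theta]$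 is the distribution with cdf $z\mapsto\mathbb{E}_{\theta\sim\Theta}[F_\theta(z)]$. *)

(* Defs.v *)
From HB Require Import structures.
From mathcomp Require Import all_boot all_order all_algebra.
From mathcomp Require Import all_classical all_reals all_analysis.
Set Implicit Arguments. Unset Strict Implicit. Unset Printing Implicit Defensive.
Import Order.TTheory GRing.Theory Num.Theory.
Import numFieldNormedType.Exports.
Local Open Scope classical_set_scope.
Local Open Scope ring_scope.
Local Open Scope ereal_scope.

Definition nonneg_dist {R : realType} (P : probability R R) : Prop :=
  P `]-oo, 0%R[%classic = 0.

Definition dcdf {R : realType} (P : probability R R) (x : R) : \bar R :=
  P `]-oo, x]%classic.

Definition Fclass {R : realType} (mu sigma : R) : set (probability R R) :=
  [set P | nonneg_dist P
         /\ \int[P]_x (x%:E) = mu%:E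
         /\ \int[P]_x (((x - mu) ^+ 2)%R%:E) <= ((sigma ^+ 2)%R)%:E].

Definition REV {R : realType} (p : R) (P : probability R R) : \bar R :=
  p%:E * P `[p, +oo[%classic.

Definition REVA {R : realType} (A P : probability R R) : \bar R :=
  \int[A]_p REV p P.

Definition OPT {R : realType} (P : probability R R) : \bar R :=
  ereal_sup [set REV p P | p in [set p : R | (0 <= p)%R]].

Definition ratio_inf {R : realType} (a b : \bar R) : \bar R :=
  if b == 0 then +oo else a * b^-1.

Definition APX {R : realType} (mu sigma : R) : \bar R :=
  ereal_inf [set ereal_sup [set ratio_inf (OPT P) (REVA A P) | P in Fclass mu sigma]
            | A in [set A : probability R R | nonneg_dist A]].

(* Main.v *)
Require Import Defs.
From HB Require Import structures.
From mathcomp Require Import all_boot all_order all_algebra.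
From mathcomp Require Import all_classical all_reals all_analysis.
From mathcomp Require Import measurable_realfun.
Import Order.TTheory GRing.Theory Num.Theory.
Import numFieldNormedType.Exports.
Local Open Scope classical_set_scope.
Local Open Scope ring_scope.
Local Open Scope ereal_scope.

Lemma le_int d (T : measurableType d) (R : realType) (mu : {measure set T -> \bar R})
  (D : set T) (f g : T -> \bar R) : (forall x, D x -> f x <= g x) ->
  \int[mu]_(x in D) f x <= \int[mu]_(x in D) g x.
Proof.
move=> fg; rewrite /integral.
have pfg : {in setT, forall x, (f \_ D) x <= (g \_ D) x}.
  by move=> x _; rewrite /patch; case: ifPn => // /set_mem /fg.
apply: leeB.
  apply: ereal_sup_le => _ [h /= hf <-]; exists h => //= x.
  exact: (le_trans (hf x) (funepos_le pfg (in_setT x))).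
apply: ereal_sup_le => _ [h /= hf <-]; exists h => //= x.
exact: (le_trans (hf x) (funeneg_le pfg (in_setT x))).
Qed.
Arguments le_int {d T R mu D f g}.

Lemma dcdf_ge0 (R : realType) (P : probability R R) x : 0 <= dcdf P x.
Proof. exact: measure_ge0. Qed.
Lemma dcdf_le1 (R : realType) (P : probability R R) x : dcdf P x <= 1.
Proof. exact: probability_le1. Qed.
Lemma dcdf_fin (R : realType) (P : probability R R) x : dcdf P x \is a fin_num.
Proof. by rewrite ge0_fin_numE ?dcdf_ge0// (le_lt_trans (dcdf_le1 _ _ _)) ?ltry. Qed.
Lemma dcdfC (R : realType) (P : probability R R) x :
  1 - dcdf P x = P `]x, +oo[%classic.
Proof. by rewrite /dcdf -probability_setC// setCitvl. Qed.
Lemma cvg_ge (R : realType) (P : probability R R) p c : (0 <= c)%R ->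
  (fun n => c%:E * (1 - dcdf P (p - n.+1%:R^-1)%R)) @ \oo --> c%:E * P `[p, +oo[%classic.
Proof.
move=> c0; apply: cvgeZl => //.
under eq_fun do rewrite dcdfC.
have -> : `[p, +oo[%classic = \bigcap_n `]((p - n.+1%:R^-1)%R), +oo[%classic.
  apply/seteqP; split=> x /=.
    rewrite in_itv/= andbT => px n _ /=; rewrite in_itv/= andbT.
    by rewrite (lt_le_trans _ px)// ltrBlDr ltrDl.
  move=> h; rewrite in_itv/= andbT; rewrite leNgt; apply/negP => xp.
  have [k hk] := ltr_add_invr xp.
  by have := h k I; rewrite /= in_itv/= andbT ltrBlDr ltNge (ltW hk).
apply: nonincreasing_cvg_mu => //.
- by rewrite (le_lt_trans (probability_le1 _ _)) ?ltry.
- apply: bigcap_measurable => //; by exists 0%N.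
- move=> n m nm; apply/subsetPset => x /=; rewrite !in_itv/= !andbT.
  apply: le_lt_trans; rewrite lerD2l lerN2 lef_pV2 ?posrE// ler_nat ltnS//.
Qed.

Arguments dcdf_ge0 {R}. Arguments dcdf_le1 {R}. Arguments dcdf_fin {R}.
Arguments dcdfC {R}. Arguments cvg_ge {R}.
Lemma dcdf_neg (R : realType) (P : probability R R) x :
  nonneg_dist P -> (x < 0)%R -> dcdf P x = 0.
Proof.
move=> nn x0; apply/eqP; rewrite eq_le dcdf_ge0 andbT -nn.
apply: le_measure; rewrite ?inE//.
by move=> y /=; rewrite !in_itv/= => /le_lt_trans; apply.
Qed.

Lemma mG (R : realType) d (T : measurableType d) (Pth : T -> probability R R) :
  (forall th, nonneg_dist (Pth th)) ->
  measurable_fun [set xt : R * T | (0 <= fst xt)%R]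
      (fun xt : R * T => fine (dcdf (Pth (snd xt)) (fst xt))) ->
  measurable_fun setT (fun xt : R * T => fine (dcdf (Pth (snd xt)) (fst xt))).
Proof.
move=> nn mD.
have mS : measurable [set xt : R * T | (0 <= fst xt)%R].
  have -> : [set xt : R * T | (0 <= fst xt)%R] = `[0%R, +oo[%classic `*` setT.
    apply/seteqP; split => -[x t] /=; rewrite in_itv/= andbT; first by move=> x0; split.
    by case.
  exact: measurableX.
rewrite -(setUv [set xt : R * T | (0 <= fst xt)%R]).
apply/measurable_funU => //; first exact: measurableC.
split => //.
refine (eq_measurable_fun (fun _ : R * T => (0%R : R)) _ (measurable_cst _)).
move=> [x t]; rewrite inE /= => /negP; rewrite -ltNge => x0.
by rewrite dcdf_neg.
Qed.
Arguments mG {R d T Pth}.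

Lemma mSec (R : realType) d (T : measurableType d) (Pth : T -> probability R R) :
  (forall th, nonneg_dist (Pth th)) ->
  measurable_fun [set xt : R * T | (0 <= fst xt)%R]
      (fun xt : R * T => fine (dcdf (Pth (snd xt)) (fst xt))) ->
  forall x, measurable_fun setT (fun th => dcdf (Pth th) x).
Proof.
move=> nn mD x.
have := measurable_fun_pair2 x (mG nn mD) => /measurable_EFinP.
by apply: eq_measurable_fun => th _ /=; rewrite fineK// dcdf_fin.
Qed.

Lemma mF (R : realType) d (T : measurableType d) (Pth : T -> probability R R) :
  (forall th, nonneg_dist (Pth th)) ->
  measurable_fun [set xt : R * T | (0 <= fst xt)%R]
      (fun xt : R * T => fine (dcdf (Pth (snd xt)) (fst xt))) ->
  measurable_fun setT (fun z : R * T => (Num.max z.1 0%R)%:E * Pth z.2 `[z.1, +oo[%classic).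
Proof.
move=> nn mD.
have mg := mG nn mD.
apply: (emeasurable_fun_cvg (fun n (z : R * T) => ((Num.max z.1 0%R) *
   (1 - fine (dcdf (Pth z.2) (z.1 - n.+1%:R^-1))))%:E)%R).
- move=> n; apply/measurable_EFinP; apply: measurable_funM.
    by apply: measurable_maxr => //; exact: measurable_fst.
  apply: measurable_funB => //.
  have h2 : measurable_fun setT (fun z : R * T => ((z.1 - n.+1%:R^-1)%R, z.2)).
    apply: measurable_fun_pair; last exact: measurable_snd.
    by apply: measurable_funB => //; exact: measurable_fst.
  exact: (measurableT_comp mg h2).
- move=> z _ /=.
  have c0 : (0 <= Num.max z.1 0%R)%R by rewrite le_max lexx orbT.
  have := cvg_ge (Pth z.2) z.1 _ c0.
  apply: cvg_trans; apply: near_eq_cvg; near=> n.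
  by rewrite /= EFinM EFinB fineK// dcdf_fin.
Unshelve. all: by end_near.
Qed.
Arguments mF {R d T Pth}.
Arguments mSec {R d T Pth}.

Lemma int_dcdfC (R : realType) d (T : measurableType d) (Th : probability T R)
  (Pth : T -> probability R R) (Q : probability R R) x :
  measurable_fun setT (fun th => dcdf (Pth th) x) ->
  dcdf Q x = (\int[Th]_th dcdf (Pth th) x) ->
  \int[Th]_th (1 - dcdf (Pth th) x) = 1 - dcdf Q x.
Proof.
move=> mx hQ.
have h : \int[Th]_th (1 - dcdf (Pth th) x) + \int[Th]_th dcdf (Pth th) x = 1.
  rewrite -ge0_integralD//.
  - under eq_integral do rewrite subeK ?dcdf_fin//.
    by rewrite integral_cst// mul1e; exact: probability_setT.
  - by move=> th _; rewrite subre_ge0 ?dcdf_fin ?dcdf_le1.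
  - by apply: emeasurable_funB => //; exact: measurable_cst.
rewrite -hQ in h; by rewrite -[in RHS]h addeK// dcdf_fin.
Qed.

Lemma Qside (R : realType) d (T : measurableType d) (Th : probability T R)
  (Pth : T -> probability R R) (Q : probability R R) p c :
  (forall x, measurable_fun setT (fun th => dcdf (Pth th) x)) ->
  (forall x, dcdf Q x = (\int[Th]_th dcdf (Pth th) x)) -> (0 <= c)%R ->
  \int[Th]_th (c%:E * Pth th `[p, +oo[%classic) <= c%:E * Q `[p, +oo[%classic.
Proof.
move=> mx hQ c0.
have key n : \int[Th]_th (c%:E * Pth th `[p, +oo[%classic) <=
    c%:E * (1 - dcdf Q (p - n.+1%:R^-1)%R).
  apply: (le_trans (le_int (g := fun th => c%:E * (1 - dcdf (Pth th) (p - n.+1%:R^-1)%R)) _)).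
    move=> th _; apply: lee_wpmul2l; first by rewrite lee_fin.
    rewrite dcdfC; apply: le_measure; rewrite ?inE//.
    move=> y /=; rewrite !in_itv/= !andbT; apply: lt_le_trans.
    by rewrite ltrBlDr ltrDl.
  rewrite ge0_integralZl_EFin//.
  - by rewrite (int_dcdfC _ _ _ _ _ Q _ (mx _) (hQ _)).
  - by move=> th _; rewrite subre_ge0 ?dcdf_fin ?dcdf_le1.
  - by apply: emeasurable_funB => //; exact: measurable_cst.
have H := cvg_ge Q p c c0.
rewrite -(cvg_lim _ H)//; apply: lime_ge.
  by apply/cvg_ex; eexists; exact: H.
exact: nearW.
Qed.

Lemma neg_null (R : realType) (A : probability R R) (f : R -> \bar R) :
  nonneg_dist A -> (forall x, 0 <= f x) -> (forall x, (0 <= x)%R -> f x = 0) ->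
  \int[A]_x f x = 0.
Proof.
move=> nn f0 fp; apply/eqP; rewrite eq_le integral_ge0// andbT.
apply: le_trans.
  apply: (@le_int _ _ _ A setT _ (fun x => +oo * (\1_(`]-oo, 0[%classic) x)%:E)).
  move=> x _; have [x0|x0] := leP 0%R x.
    by rewrite fp// mule_ge0// lee_fin.
  by rewrite indicE mem_set/= ?in_itv//= mule1 leey.
rewrite ge0_integralZl//.
- rewrite integral_indic// setIT.
  by rewrite [X in +oo * X](_ : _ = 0%E); [rewrite mule0|exact: nn].
- by apply/measurable_EFinP; exact: measurable_indic.
Qed.

Lemma REVA_eq (R : realType) (A P : probability R R) : nonneg_dist A ->
  REVA A P = \int[A]_p ((Num.max p 0%R)%:E * P `[p, +oo[%classic).
Proof.
move=> nn; rewrite /REVA integralE.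
rewrite (neg_null _ A (fun p => REV p P)^\-) ?sube0//; last first.
  move=> p p0; rewrite funenegE /REV max_r// leeNl oppe0 mule_ge0// lee_fin.
apply: eq_integral => p _; rewrite funeposE /REV.
have [p0|p0] := leP 0%R p.
  by rewrite max_l// mule_ge0// lee_fin.
by rewrite mul0e max_r// mule_le0_ge0// lee_fin ltW.
Qed.

Lemma markov_F (R : realType) (mu sigma : R) (P : probability R R) p :
  Fclass mu sigma P -> (0 <= p)%R -> p%:E * P `[p, +oo[%classic <= mu%:E.
Proof.
case=> nn [hm _] p0.
have h0 : \int[P]_x ((fun x : R => x%:E)^\- x) = 0.
  apply: neg_null => // x x0.
  by rewrite funenegE max_r// leeNl oppe0 lee_fin.
have -> : mu%:E = \int[P]_x ((fun x : R => x%:E)^\+ x).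
  by rewrite -hm integralE h0 sube0.
have -> : p%:E * P `[p, +oo[%classic =
    \int[P]_x (p%:E * (\1_(`[p, +oo[%classic) x)%:E).
  rewrite ge0_integralZl_EFin//.
  - by rewrite integral_indic// setIT.
  - by apply/measurable_EFinP; exact: measurable_indic.
apply: le_int => x _; rewrite funeposE indicE.
have [hx|hx] := boolP (x \in `[p, +oo[%classic).
  rewrite mule1 le_max lee_fin; move: hx; rewrite inE /= in_itv /= andbT => ->.
  by [].
by rewrite mule0 le_max lexx orbT.
Qed.

Lemma OPT_ge0 (R : realType) (P : probability R R) : 0 <= OPT P.
Proof.
apply: ereal_sup_ubound => /=; exists 0%R => //.
by rewrite /REV mul0e.
Qed.

Lemma REV_le_OPT (R : realType) (P : probability R R) p : REV p P <= OPT P.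
Proof.
have [p0|p0] := leP 0%R p.
  by apply: ereal_sup_ubound => /=; exists p.
apply: le_trans; last exact: OPT_ge0.
by rewrite /REV mule_le0_ge0// lee_fin ltW.
Qed.

Lemma REVA_le_OPT (R : realType) (A P : probability R R) : REVA A P <= OPT P.
Proof.
apply: le_trans.
  apply: (@le_int _ _ _ A setT _ (cst (OPT P))) => p _; exact: REV_le_OPT.
by rewrite integral_cst// [X in _ * X](_ : _ = 1); [rewrite mule1|exact: probability_setT].
Qed.

Lemma OPT_le_mu (R : realType) (mu sigma : R) (P : probability R R) :
  Fclass mu sigma P -> OPT P <= mu%:E.
Proof.
move=> hP; apply: ge_ereal_sup => _ [p /= p0 <-].
exact: markov_F hP p0.
Qed.

Arguments REVA_le_OPT {R}. Arguments OPT_le_mu {R mu sigma P}.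
Arguments OPT_ge0 {R}. Arguments REVA_eq {R}.

Theorem lemma4 (R : realType) (mu sigma : R) :
  (0 < mu)%R -> (0 <= sigma)%R ->
  forall (d : measure_display) (T : measurableType d) (Th : probability T R)
         (Pth : T -> probability R R),
    (forall th, Fclass mu sigma (Pth th)) ->
    measurable_fun [set xt : R * T | (0 <= fst xt)%R]
      (fun xt : R * T => fine (dcdf (Pth (snd xt)) (fst xt))) ->
    forall Q : probability R R,
      (forall z : R, dcdf Q z = (\int[Th]_th dcdf (Pth th) z)) ->
      ratio_inf (\int[Th]_th OPT (Pth th)) (OPT Q) <= APX mu sigma.
Proof.
move=> mu0 s0 d T Th Pth hF mD Q hQ.
have nn th : nonneg_dist (Pth th) by case: (hF th).
have msec := mSec nn mD.
have mf := mF nn mD.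
have f0 : forall z : R * T, 0 <= (Num.max z.1 0%R)%:E * Pth z.2 `[z.1, +oo[%classic.
  by move=> z; rewrite mule_ge0// lee_fin le_max lexx orbT.
have [th0 _] : exists th : T, True.
  apply/not_existsP => hT.
  have e : [set: T] = set0 by apply/seteqP; split => // x; have := hT x.
  have := probability_setT Th; rewrite e measure0 => h.
  by have := @lte01 R; rewrite -h ltxx.
rewrite /APX; apply/ereal_infP => _ [A nnA <-].
set S := ereal_sup _.
have hS th : ratio_inf (OPT (Pth th)) (REVA A (Pth th)) <= S.
  by apply: ereal_sup_ubound; exists (Pth th).
have [->|Sfin] := eqVneq S +oo; first exact: leey.
have Rge0 th : 0 <= REVA A (Pth th).
  by rewrite REVA_eq// integral_ge0// => p _; exact: (f0 (p, th)).
have Rle th : REVA A (Pth th) <= mu%:E.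
  exact: le_trans (REVA_le_OPT A (Pth th)) (OPT_le_mu (hF th)).
have Rne0 th : REVA A (Pth th) != 0.
  apply/negP => /eqP h0; have := hS th.
  by rewrite /ratio_inf h0 eqxx leye_eq (negbTE Sfin).
have Sge0 : 0 <= S.
  apply: le_trans (hS th0).
  by rewrite /ratio_inf (negbTE (Rne0 th0)) mule_ge0 ?OPT_ge0// inve_ge0.
have Sfin' : S \is a fin_num by rewrite ge0_fin_numE// ltey.
set s := fine S.
have Se : S = s%:E by rewrite fineK.
have s0' : (0 <= s)%R by rewrite -lee_fin -Se.
have key th : OPT (Pth th) <= s%:E * REVA A (Pth th).
  have rf : REVA A (Pth th) \is a fin_num.
    by rewrite ge0_fin_numE// (le_lt_trans (Rle th)) ?ltry.
  have rpos : (0 < fine (REVA A (Pth th)))%R.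
    by apply: fine_gt0; rewrite lt0e Rne0 Rge0 (le_lt_trans (Rle th)) ?ltry.
  have := hS th; rewrite /ratio_inf (negbTE (Rne0 th)) Se -(fineK rf) inver.
  by rewrite gt_eqF// lee_pdivrMr// muleC.
have mR : measurable_fun setT (fun th => REVA A (Pth th)).
  have := measurable_fun_fubini_tonelli_G (m1 := A) _ mf f0.
  apply: eq_measurable_fun => th _; rewrite /fubini_G (REVA_eq A (Pth th) nnA).
  by [].
have E1 : \int[Th]_th OPT (Pth th) <= s%:E * \int[Th]_th REVA A (Pth th).
  apply: le_trans.
    by apply: (@le_int _ _ _ Th setT _ (fun th => s%:E * REVA A (Pth th))) => th _; exact: key.
  by rewrite ge0_integralZl_EFin.
have E2 : \int[Th]_th REVA A (Pth th) <= REVA A Q.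
  under eq_integral => th _ do rewrite (REVA_eq A (Pth th) nnA).
  rewrite (REVA_eq A Q nnA).
  have := fubini_tonelli (m1 := A) (m2 := Th) _ mf f0; rewrite /= => <-.
  apply: le_int => p _.
  apply: Qside => //.
  by rewrite le_max lexx orbT.
have E3 := REVA_le_OPT A Q.
have chain : \int[Th]_th OPT (Pth th) <= s%:E * OPT Q.
  apply: le_trans E1 _; apply: lee_wpmul2l; first by rewrite lee_fin.
  exact: le_trans E2 E3.
have OQ0 : OPT Q != 0.
  apply/negP => /eqP h0.
  have hI : \int[Th]_th `|REVA A (Pth th)| = 0.
    under eq_integral => th _ do rewrite gee0_abs ?Rge0//.
    apply/eqP; rewrite eq_le integral_ge0// andbT -h0.
    exact: le_trans E2 E3.
  have := (ae_eq_integral_abs _ measurableT mR).1 hI.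
  move=> [N [mN N0 sub]].
  have : Th setT <= Th N.
    apply: le_measure; rewrite ?inE//.
    move=> th _; apply: sub => /= h; move/eqP: (Rne0 th); apply.
    exact: h.
  rewrite N0 probability_setT.
  by rewrite leNgt lte01.
rewrite /ratio_inf (negbTE OQ0).
case EQ: (OPT Q) => [q||].
- have q0 : (0 < q)%R.
    by rewrite lt_def -lee_fin -EQ OPT_ge0 andbT; move: OQ0; rewrite EQ eqe.
  rewrite inver gt_eqF// Se lee_pdivrMr//.
  by rewrite -EQ.
- by rewrite invey mule0 Se lee_fin.
- by have := OPT_ge0 Q; rewrite EQ.
Qed.
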